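(* Let $m\ge2$, $k\ge1$ be integers, $\alpha\in(1,m^{1/k})$, $\tau>0$, and $\Theta\sim U[0,1]$. Then: (1) $\mathbb{E}_\Theta[\mathcal{R}^\alpha_{m,k,\Theta}(t)]=\frac{k}{\ln m}\left(\alpha+\frac{m^{1/k}}{\alpha}-2\right)t$ for every $t>0$; (2) $\mathbb{E}_\Theta\!\left[\frac{1}{\mathcal{R}^\alpha_{m,k,\Theta}(t)}\right]=\frac{k}{\ln m}\left(2-\frac1\alpha-\frac{\alpha}{m^{1/k}}\right)\frac1t$ for every $t>0$; (3) $\mathbb{E}_\Theta[\mathcal{D}^\alpha_{m,k,\Theta}]=\frac{k}{\ln m}\left(\left(1-\frac{\alpha}{m^{1/k}}\right)\Sigma^{\alpha,\mathrm{prim}}_{m,k}+\left(1-\frac1\alpha\right)\Sigma^{\alpha,\mathrm{sec}}_{m,k}\right)\frac1\tau$.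
   Context: Primary grid $\mathcal{G}_{m,k}=\{m^{p/k}\tau:p\in\mathbb{Z}\}$, secondary grid $\mathcal{G}^\alpha_{m,k}=\{\alpha m^{p/k}\tau:p\in\mathbb{Z}\}$; for $\theta\in[0,1]$ the shifted interleaved grid is $\mathcal{H}^\alpha_{m,k,\theta}=\{m^{\theta/k}g:g\in\mathcal{G}_{m,k}\cup\mathcal{G}^\alpha_{m,k}\}$, and $\mathcal{R}^\alpha_{m,k,\theta}(t)=\min\{g\in\mathcal{H}^\alpha_{m,k,\theta}:g>t\}$ for $t>0$. For $g>0$, $\Delta\ge0$, $\mathcal{M}_{g,\Delta}=\{0,g,\dots,\lfloor\Delta/g\rfloor g\}$. Density coefficient: $\mathcal{D}^\alpha_{m,k,\theta}=\lim_{\Delta\to\infty}\frac1\Delta\big|\bigcup_{g\in\mathcal{H}^\alpha_{m,k,\theta}\cap[\mathcal{R}^\alpha_{m,k,\theta}(\tau),\infty)}\mathcal{M}_{g,\Delta}\big|$. For a finite $\mathcal{N}\subseteq\mathbb{R}_{>0}$, $\mathrm{LCM}(\mathcal{N})$ is the smallest positive real that is an integer multiple of every element of $\mathcal{N}$, or $\infty$ if none exists; $1/\infty=0$. Let $\mathcal{S}^{\alpha,\mathrm{prim}}_{m,k}=\{m^{(\kappa-1)/k}\}_{\kappa\in[k]}\cup\{\alpha m^{(\kappa-1)/k}\}_{\kappa\in[k]}$, $\mathcal{S}^{\alpha,\mathrm{sec}}_{m,k}=\{m^{(\kappa-1)/k}\}_{\kappa\in[k]}\cup\{\frac1\alpha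 m^{\kappa/k}\}_{\kappa\in[k]}$, and $\Sigma^{\alpha,\mathrm{prim}}_{m,k}=\sum_{\emptyset\ne\mathcal{N}\subseteq\mathcal{S}^{\alpha,\mathrm{prim}}_{m,k}}\frac{(-1)^{|\mathcal{N}|+1}}{\mathrm{LCM}(\mathcal{N})}$, $\Sigma^{\alpha,\mathrm{sec}}_{m,k}=\sum_{\emptyset\ne\mathcal{N}\subseteq\mathcal{S}^{\alpha,\mathrm{sec}}_{m,k}}\frac{(-1)^{|\mathcal{N}|+1}}{\mathrm{LCM}(\mathcal{N})}$. *)

(* Defs.v *)
From HB Require Import structures.
From mathcomp Require Import all_boot all_order all_algebra.
From mathcomp Require Import finmap.
From mathcomp Require Import all_classical all_reals all_analysis.
Set Implicit Arguments. Unset Strict Implicit. Unset Printing Implicit Defensive.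
Import Order.TTheory GRing.Theory Num.Theory.
Import numFieldNormedType.Exports.
Local Open Scope classical_set_scope.
Local Open Scope ring_scope.

Section Defs.
Variable R : realType.

Definition Hgrid (m k : nat) (alpha tau theta : R) : set R :=
  [set g | exists p : int,
     g = (m%:R `^ (theta / k%:R)) * ((m%:R `^ (p%:~R / k%:R)) * tau) \/
     g = (m%:R `^ (theta / k%:R)) * (alpha * (m%:R `^ (p%:~R / k%:R)) * tau)].

(* R^alpha_{m,k,theta}(t) = min { g in H : g > t } (the minimum exists since
   the grid is a discrete geometric-type set; we take the infimum). *)
Definition Rnext (m k : nat) (alpha tau theta t : R) : R :=
  inf [set g | Hgrid m k alpha tau theta g /\ t < g].

Definition Mset (g Delta : R) : set R :=
  [set x | exists n : nat, x = n%:R * g /\ (n%:R <= Delta / g)].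

Definition Dunion (m k : nat) (alpha tau theta Delta : R) : set R :=
  \bigcup_(g in [set g | Hgrid m k alpha tau theta g /\
                         Rnext m k alpha tau theta tau <= g]) Mset g Delta.

Definition Dens (m k : nat) (alpha tau theta : R) : R :=
  lim ((fun Delta : R =>
          (#|` fset_set (Dunion m k alpha tau theta Delta)|)%:R / Delta)
       @ +oo).

Definition common_multiple (N : seq R) (x : R) : Prop :=
  0 < x /\ forall y, y \in N -> exists z : int, x = z%:~R * y.

(* 1 / LCM(N), with 1/oo = 0 *)
Definition invLCM (N : seq R) : R :=
  if asbool (exists x, common_multiple N x)
  then (inf [set x | common_multiple N x])^-1 else 0.

(* elements of S^{alpha,prim}_{m,k}, indexed by ('I_k * bool):
   (kappa-1, false) |-> m^{(kappa-1)/k},  (kappa-1, true) |-> alpha m^{(kappa-1)/k} *)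
Definition Sprim (m k : nat) (alpha : R) (i : 'I_k * bool) : R :=
  if i.2 then alpha * m%:R `^ ((i.1)%:R / k%:R) else m%:R `^ ((i.1)%:R / k%:R).

(* elements of S^{alpha,sec}_{m,k}:
   (kappa-1, false) |-> m^{(kappa-1)/k},  (kappa-1, true) |-> (1/alpha) m^{kappa/k} *)
Definition Ssec (m k : nat) (alpha : R) (i : 'I_k * bool) : R :=
  if i.2 then alpha^-1 * m%:R `^ ((i.1).+1%:R / k%:R)
  else m%:R `^ ((i.1)%:R / k%:R).

(* inclusion-exclusion sum over nonempty subsets of the (2k distinct) elements *)
Definition SigmaLCM (k : nat) (f : 'I_k * bool -> R) : R :=
  \sum_(N : {set 'I_k * bool} | N != finset.set0)
     (-1) ^+ (#|N|.+1) * invLCM [seq f i | i in N].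

End Defs.

Arguments Sprim {R} m k alpha i.
Arguments Ssec {R} m k alpha i.

(* Main.v *)
Require Import Defs.
From HB Require Import structures.
From mathcomp Require Import all_boot all_order all_algebra.
From mathcomp Require Import finmap.
From mathcomp Require Import all_classical all_reals all_analysis.
From mathcomp Require Import measurable_realfun.
From mathcomp Require Import ring lra.
Set Implicit Arguments. Unset Strict Implicit. Unset Printing Implicit Defensive.
Import Order.TTheory GRing.Theory Num.Theory.
Import numFieldNormedType.Exports.
Local Open Scope classical_set_scope.
Local Open Scope ring_scope.
From mathcomp Require Import zify.
Lemma intr_one (R : realType) : ((1:int)%:~R : R) = 1. Proof. by []. Qed.
Section S. Variable R : realType.
Lemma der_exp (A b K x : R) : is_derive x 1 (fun t : R => A * expR (b * (t + K))) (A * (b * expR (b * (x+K)))).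
Proof.
have hg : is_derive x 1 (fun t : R => b * (t + K)) b.
  have h1 : is_derive x 1 (fun t : R => t + K) 1.
    have := is_deriveD (is_derive_id x (1:R)) (is_derive_cst K x (1:R)).
    by rewrite addr0.
  have := is_deriveZ b h1.
  have -> : (b \*: (fun t : R => t + K)) = (fun t : R => b * (t + K)) by [].
  by rewrite /GRing.scale /= mulr1.
have hc := @is_derive1_comp R expR (fun t => b * (t + K)) x _ _ (is_derive_expR _) hg.
have := is_deriveZ A hc.
have -> : (A \*: (expR \o (fun t : R => b * (t + K)))) = (fun t : R => A * expR (b * (t + K))) by [].
move=> h; apply: (is_derive_eq h).
by rewrite [expR _ * b]mulrC.
Qed.
Let mu := @lebesgue_measure R.

Lemma cont_exp (A b K : R) : continuous (fun t : R => A * expR (b * (t + K))).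
Proof. by move=> x; apply/differentiable_continuous/derivable1_diffP; have := der_exp A b K x; case. Qed.

Lemma piece (f : R -> R) (A b K x y : R) : b != 0 -> x <= y ->
  (forall t, x < t < y -> f t = A * expR (b * (t + K))) ->
  measurable_fun `[x, y] f /\
  (\int[mu]_(t in `[x, y]) (f t)%:E = ((A * expR (b*(y+K)) - A * expR (b*(x+K))) / b)%:E)%E.
Proof.
move=> b0; rewrite le_eqVlt => /predU1P[<- _|xy fE].
  by rewrite set_itv1 integral_set1 subrr mul0r; split => //; exact: measurable_fun_set1.
pose g := fun t : R => A * expR (b * (t + K)).
have mfo : measurable_fun `]x, y[ f.
  apply: (eq_measurable_fun g).
    by move=> t; rewrite inE /= in_itv /= => /fE.
  apply: measurable_funS (continuous_measurable_fun (@cont_exp A b K)) => //.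
split; first by apply/measurable_fun_itv_obnd_cbndP/measurable_fun_itv_bndo_bndcP.
rewrite (@integral_itv_bndoo _ x y _ true false); last by apply/measurable_EFinP.
transitivity (\int[mu]_(t in `]x, y[) (g t)%:E)%E.
  by apply: eq_integral => t; rewrite inE /= in_itv /= => /fE ->.
rewrite -(@integral_itv_bndoo _ x y _ true false); last first.
  apply/measurable_EFinP; apply: measurable_funS (continuous_measurable_fun (@cont_exp A b K)) => //.
pose F := fun t : R => (A / b) * expR (b * (t + K)).
rewrite (@continuous_FTC2 _ _ F) //.
- by rewrite -EFinB; congr (_%:E); rewrite /F; field.
- by apply: continuous_in_subspaceT => z _; exact: cont_exp.
- split.
  + by move=> z _; have := der_exp (A / b) b K z; case.
  + by apply: cvg_at_right_filter; exact: cont_exp.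
  + by apply: cvg_at_left_filter; exact: cont_exp.
- move=> z _; by rewrite derive1E; have [_ ->] := der_exp (A / b) b K z; rewrite /g; field.
Qed.
Lemma split_int (f : R -> R) (x y z : R) : x <= y -> y <= z ->
  measurable_fun `[x, y] f -> measurable_fun `[y, z] f ->
  measurable_fun `[x, z] f /\
  (\int[mu]_(t in `[x, z]) (f t)%:E = \int[mu]_(t in `[x, y]) (f t)%:E + \int[mu]_(t in `[y, z]) (f t)%:E)%E.
Proof.
move=> xy yz mxy myz.
have E : `[x, z]%classic = `[x, y]%classic `|` `]y, z]%classic :> set R.
  by apply: itv_bndbnd_setU; rewrite bnd_simp.
have myz' : measurable_fun `]y, z] f.
  by apply: measurable_funS myz => //; apply: subset_itvr; rewrite bnd_simp.
have mU : measurable_fun `[x, z] f by rewrite E; apply/measurable_funU.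
split => //.
rewrite E integral_setU //; last 2 first.
- by apply/(measurable_EFinP _ f); rewrite -E.
- apply/disj_setPS => t [/=]; rewrite !in_itv /= => /andP[_ ty] /andP[yt _].
  by move: (lt_le_trans yt ty); rewrite ltxx.
  by rewrite integral_itv_obnd_cbnd //; apply/(measurable_EFinP _ f).
Qed.

Definition fr (x : R) := x - (Num.floor x)%:~R.

Lemma fr_itv x : 0 <= fr x < 1.
Proof. rewrite /fr; have := floor_itv x; rewrite intrD intr_one /=; move=> /andP[h1 h2]; apply/andP; split; lra. Qed.

Lemma fr_sub1 s t : 0 <= fr s - t < 1 -> fr (s - t) = fr s - t.
Proof.
move=> /andP[h1 h2]; rewrite /fr.
have -> : Num.floor (s - t) = Num.floor s.
  apply: floor_def; rewrite intrD intr_one /=; move: h1 h2; rewrite /fr => h1 h2.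
  apply/andP; split; lra.
by rewrite addrAC.
Qed.

Lemma fr_sub2 s t : -1 <= fr s - t < 0 -> fr (s - t) = fr s - t + 1.
Proof.
move=> /andP[h1 h2]; rewrite /fr.
have -> : Num.floor (s - t) = Num.floor s - 1.
  apply: floor_def; rewrite subrK intrB /=; move: h1 h2; rewrite /fr => h1 h2.
  apply/andP; split; lra.
rewrite intrB /=; lra.
Qed.

Definition Gf (a b A1 A2 : R) (p : R) :=
  if p < a then A1 * expR (b * (a - p)) else A2 * expR (b * (1 - p)).

Lemma KL (a b A1 A2 s : R) : 0 < a < 1 -> b != 0 ->
  (\int[mu]_(t in `[0%R, 1%R]) (Gf a b A1 A2 (fr (s - t)))%:E =
   ((A1 * (expR (b * a) - 1) + A2 * (expR (b * (1 - a)) - 1)) / b)%:E)%E.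
Proof.
move=> /andP[a0 a1] b0.
have /andP[s00 s01] := fr_itv s.
set s0 := fr s in s00 s01 *.
have [as0|s0a] := leP a s0.
- have eI1 : forall t, 0 < t < s0 - a -> Gf a b A1 A2 (fr (s - t)) = A2 * expR (b * (t + (1 - s0))).
    move=> t /andP[t0 t1]; rewrite fr_sub1 -/s0; last by rewrite -/s0; apply/andP; split; lra.
    rewrite /Gf ifF; last by apply/negbTE; rewrite -leNgt; lra.
    by congr (_ * expR (_ * _)); lra.
  have [m1 I1] := @piece (fun t => Gf a b A1 A2 (fr (s - t))) A2 b (1 - s0) 0 (s0 - a) b0 ltac:(lra) eI1.
  have eI2 : forall t, (s0 - a) < t < s0 -> Gf a b A1 A2 (fr (s - t)) = A1 * expR (b * (t + (a - s0))).
    move=> t /andP[t0 t1]; rewrite fr_sub1 -/s0; last by rewrite -/s0; apply/andP; split; lra.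
    rewrite /Gf ifT; last by lra.
    by congr (_ * expR (_ * _)); lra.
  have [m2 I2] := @piece (fun t => Gf a b A1 A2 (fr (s - t))) A1 b (a - s0) (s0 - a) s0 b0 ltac:(lra) eI2.
  have eI3 : forall t, s0 < t < 1 -> Gf a b A1 A2 (fr (s - t)) = A2 * expR (b * (t + (- s0))).
    move=> t /andP[t0 t1]; rewrite fr_sub2 -/s0; last by rewrite -/s0; apply/andP; split; lra.
    rewrite /Gf ifF; last by apply/negbTE; rewrite -leNgt; lra.
    by congr (_ * expR (_ * _)); lra.
  have [m3 I3] := @piece (fun t => Gf a b A1 A2 (fr (s - t))) A2 b (- s0) s0 1 b0 ltac:(lra) eI3.
  have [m12 I12] := @split_int (fun t => Gf a b A1 A2 (fr (s - t))) 0 (s0 - a) s0 ltac:(lra) ltac:(lra) m1 m2.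
  have [m123 I123] := @split_int (fun t => Gf a b A1 A2 (fr (s - t))) 0 s0 1 ltac:(lra) ltac:(lra) m12 m3.
  rewrite I123 I12 I1 I2 I3 -!EFinD; congr EFin.
  rewrite (_ : s0 - a + (1 - s0) = 1 - a); last by lra.
  rewrite (_ : 0 + (1 - s0) = 1 - s0); last by lra.
  rewrite (_ : s0 + (a - s0) = a); last by lra.
  rewrite (_ : s0 - a + (a - s0) = 0); last by lra.
  by rewrite subrr mulr0 expR0; field.
- have eI1 : forall t, 0 < t < s0 -> Gf a b A1 A2 (fr (s - t)) = A1 * expR (b * (t + (a - s0))).
    move=> t /andP[t0 t1]; rewrite fr_sub1 -/s0; last by rewrite -/s0; apply/andP; split; lra.
    rewrite /Gf ifT; last by lra.
    by congr (_ * expR (_ * _)); lra.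
  have [m1 I1] := @piece (fun t => Gf a b A1 A2 (fr (s - t))) A1 b (a - s0) 0 s0 b0 ltac:(lra) eI1.
  have eI2 : forall t, s0 < t < (s0 + 1 - a) -> Gf a b A1 A2 (fr (s - t)) = A2 * expR (b * (t + (- s0))).
    move=> t /andP[t0 t1]; rewrite fr_sub2 -/s0; last by rewrite -/s0; apply/andP; split; lra.
    rewrite /Gf ifF; last by apply/negbTE; rewrite -leNgt; lra.
    by congr (_ * expR (_ * _)); lra.
  have [m2 I2] := @piece (fun t => Gf a b A1 A2 (fr (s - t))) A2 b (- s0) s0 (s0 + 1 - a) b0 ltac:(lra) eI2.
  have eI3 : forall t, (s0 + 1 - a) < t < 1 -> Gf a b A1 A2 (fr (s - t)) = A1 * expR (b * (t + (a - s0 - 1))).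
    move=> t /andP[t0 t1]; rewrite fr_sub2 -/s0; last by rewrite -/s0; apply/andP; split; lra.
    rewrite /Gf ifT; last by lra.
    by congr (_ * expR (_ * _)); lra.
  have [m3 I3] := @piece (fun t => Gf a b A1 A2 (fr (s - t))) A1 b (a - s0 - 1) (s0 + 1 - a) 1 b0 ltac:(lra) eI3.
  have [m12 I12] := @split_int (fun t => Gf a b A1 A2 (fr (s - t))) 0 s0 (s0 + 1 - a) ltac:(lra) ltac:(lra) m1 m2.
  have [m123 I123] := @split_int (fun t => Gf a b A1 A2 (fr (s - t))) 0 (s0 + 1 - a) 1 ltac:(lra) ltac:(lra) m12 m3.
  rewrite I123 I12 I1 I2 I3 -!EFinD; congr EFin.
  rewrite (_ : s0 + (a - s0) = a); last by lra.
  rewrite (_ : 0 + (a - s0) = a - s0); last by lra.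
  rewrite (_ : s0 + 1 - a - s0 = 1 - a); last by lra.
  rewrite (_ : 1 + (a - s0 - 1) = a - s0); last by lra.
  rewrite (_ : s0 + 1 - a + (a - s0 - 1) = 0); last by lra.
  by rewrite subrr mulr0 expR0; field.
Qed.
End S.
Lemma int_lt_succ (R : realType) (n p : int) : (n%:~R : R) < p%:~R -> (n%:~R + 1 : R) <= p%:~R.
Proof.
rewrite ltr_int => h; have h2 : (n + 1 <= p)%R by lia.
by rewrite -[1]/(1%:~R) -intrD ler_int.
Qed.
Lemma int_gt_pred (R : realType) (n p : int) : (n%:~R - 1 : R) < p%:~R -> (n%:~R : R) <= p%:~R.
Proof.
move=> h; have := @int_lt_succ R (n - 1) p; rewrite intrB /= subrK; apply; done.
Qed.
Lemma inf_min (R : realType) (S : set R) x : S x -> (forall y, S y -> x <= y) -> inf S = x.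
Proof.
move=> Sx lb; apply/le_anti/andP; split.
  by apply: (ge_inf (_ : has_lbound S)) => //; exists x.
by apply: lb_le_inf => //; exists x.
Qed.



Lemma lim_bound (R : realType) (f : R -> R) (l C : R) : 0 <= C ->
  (forall D, 0 < D -> `|f D - l| <= C / D) -> f @ +oo --> l.
Proof.
move=> C0 hb; apply/cvgrPdist_lt => e e0.
exists ((C + 1) / e); split; first by rewrite num_real.
move=> D hD.
have h1 : 0 < (C + 1) / e by rewrite divr_gt0 // ltr_wpDl.
have D0 : 0 < D by apply: lt_trans hD.
rewrite distrC; apply: le_lt_trans (hb _ D0) _.
rewrite ltr_pdivrMr //; move: hD; rewrite ltr_pdivrMr // => hD.
rewrite mulrC; apply: lt_trans hD; lra.
Qed.

Section C.
Variable R : realType.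

Lemma CM_struct (N : seq R) y0 : y0 \in N -> 0 < y0 ->
  (exists x, common_multiple N x) ->
  exists L, 0 < L /\ (forall x, common_multiple N x <-> exists n : nat, (0 < n)%N /\ x = n%:R * L).
Proof.
move=> y0N y00 [x0 [x00 hx0]].
pose P := fun n : nat => `[< common_multiple N (n.+1%:R * y0) >].
have exP : exists n, P n.
  have [z0 hz0] := hx0 _ y0N.
  have z0p : (0 < z0)%R.
    by rewrite -(ltr0z R) -(pmulr_lgt0 _ y00) -hz0.
  exists `|z0|.-1; apply/asboolP; rewrite prednK; last by lia.
  by rewrite -[_%:R]/((Posz `|z0|)%:~R) gez0_abs ?ltW // -hz0; split.
have [n0 Pn0 minn0] := ex_minnP exP.
move/asboolP: Pn0 => [L0 hL].
exists (n0.+1%:R * y0); split => // x; split.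
- move=> [xp hx].
  have [z hz] := hx _ y0N.
  have zp : (0 < z)%R by rewrite -(ltr0z R) -(pmulr_lgt0 _ y00) -hz.
  pose q := (`|z| %/ n0.+1)%N; pose r := (`|z| %% n0.+1)%N.
  have zE : `|z|%N = (q * n0.+1 + r)%N by rewrite /q /r -divn_eq.
  have xE : x = (q * n0.+1)%:R * y0 + r%:R * y0.
    by rewrite -mulrDl -natrD -zE hz -[_%:R]/((Posz `|z|)%:~R) gez0_abs // ltW.
  have r0 : r = 0%N.
    apply/eqP; rewrite -leqn0 leqNgt; apply/negP => rp.
    have : P r.-1.
      apply/asboolP; rewrite prednK //; split; first by rewrite mulr_gt0 // ltr0n.
      move=> y yN; have [zx hzx] := hx _ yN; have [zl hzl] := hL _ yN.
      exists (zx - (q%:Z) * zl); rewrite intrB intrM mulrBl -mulrA -hzl -hzx.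
      rewrite xE natrM -[q%:~R]/(q%:R); ring.
    move/minn0; have : (r < n0.+1)%N by rewrite /r ltn_mod.
    lia.
  exists q; split.
    case: (posnP q) => // q0; move: xE; rewrite q0 r0 mul0n !mul0r addr0 => xz.
    by move: xp; rewrite xz ltxx.
  by rewrite xE r0 mul0r addr0 natrM mulrA.
- move=> [n [np ->]]; split; first by rewrite mulr_gt0 // ltr0n.
  move=> y yN; have [zl hzl] := hL _ yN.
  by exists (n%:Z * zl); rewrite hzl intrM mulrA.
Qed.

Lemma invLCM_L (N : seq R) L : 0 < L ->
  (forall x, common_multiple N x <-> exists n : nat, (0 < n)%N /\ x = n%:R * L) ->
  invLCM N = L^-1.
Proof.
move=> L0 hL; rewrite /invLCM asboolT; last by exists L; apply/hL; exists 1%N; rewrite mul1r.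
congr (_^-1); apply: inf_min.
  by apply/hL; exists 1%N; rewrite mul1r.
move=> y /hL [n [n0 ->]]; rewrite ler_pMl //; by rewrite ler1n.
Qed.

Lemma invLCM_0 (N : seq R) : ~ (exists x, common_multiple N x) -> invLCM N = 0.
Proof. by move=> h; rewrite /invLCM asboolF. Qed.

Lemma CM_scale (N : seq R) r x : 0 < r ->
  common_multiple (map ( *%R r) N) x <-> common_multiple N (x / r).
Proof.
move=> r0; split.
- move=> [x0 hx]; split; first by rewrite divr_gt0.
  move=> y yN; have [z hz] := hx (r * y) (map_f _ yN).
  by exists z; rewrite hz; field; exact: lt0r_neq0.
- move=> [x0 hx]; split; first by rewrite -(divfK (lt0r_neq0 r0) x) mulr_gt0.
  move=> y' /mapP[y yN ->]; have [z hz] := hx y yN.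
  by exists z; rewrite mulrCA -hz mulrC divfK // gt_eqF.
Qed.

Lemma invLCM_scale (N : seq R) r y0 : 0 < r -> y0 \in N -> 0 < y0 ->
  invLCM (map ( *%R r) N) = r^-1 * invLCM N.
Proof.
move=> r0 y0N y00.
case: (pselect (exists x, common_multiple N x)) => hN.
  have [L [L0 hL]] := CM_struct y0N y00 hN.
  rewrite (invLCM_L L0 hL) (@invLCM_L _ (r * L)); first by rewrite invfM.
    by rewrite mulr_gt0.
  move=> x; rewrite CM_scale // hL; split => -[n [n0 hn]]; exists n; split => //.
    by move: hn => /(f_equal (fun u => u * r)); rewrite divfK ?gt_eqF // => ->; ring.
  by rewrite hn; field; exact: lt0r_neq0.
rewrite !invLCM_0 ?mulr0 //.
move=> [x /(CM_scale _ _ r0) hx]; apply: hN; by exists (x / r).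
Qed.
End C.

Section Cnt.
Variables (R : realType) (I : finType) (g : I -> R).
Hypothesis hg : forall i, 0 < g i.

Definition Un (D : R) := [set x | exists i, Mset (g i) D x].
Definition In (J : {set I}) (D : R) := [set x | forall i, i \in J -> Mset (g i) D x].
Definition cnt (S : set R) : R := (#|` fset_set S|)%:R.

Lemma ind_if (b : bool) : (b%:R : R) = if b then 1%:R else 0.
Proof. by case: b. Qed.

Lemma Mset_fin (gg D : R) : 0 < gg -> finite_set (Mset gg D).
Proof.
move=> gg0; apply: (@sub_finite_set _ _ ((fun n : nat => n%:R * gg) @` `I_(Num.trunc (D / gg)).+1)).
  move=> x [n [-> hn]]; exists n => //=.
  have h0 : 0 <= D / gg by apply: le_trans hn.
  by rewrite /= ltnS truncn_ge_nat.
exact/finite_image/finite_II.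
Qed.

Lemma Un_fin D : finite_set (Un D).
Proof.
have -> : Un D = \bigcup_(i in [set: I]) Mset (g i) D.
  by apply/seteqP; split => x [i]; [move=> h; exists i|move=> _ h; exists i].
by apply: bigcup_finite; [exact: finite_finset|move=> i _; exact: Mset_fin].
Qed.

Lemma In_sub J D : J != finset.set0 -> In J D `<=` Un D.
Proof. by case/set0Pn => i iJ x hx; exists i; apply: hx. Qed.

Lemma cnt_sum (S U : set R) : finite_set U -> S `<=` U ->
  cnt S = \sum_(x <- fset_set U) (x \in S)%:R.
Proof.
move=> fU SU; have fS := sub_finite_set SU fU.
rewrite /cnt card_fset_sum1 natr_sum.
under [RHS]eq_bigr => x _ do rewrite ind_if.
rewrite -big_mkcond /= -[in RHS]big_filter.
apply: perm_big; apply: uniq_perm; [exact: fset_uniq|exact/filter_uniq/fset_uniq|].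
move=> x; rewrite mem_filter !in_fset_set //; apply/idP/andP.
  by move=> xS; split => //; rewrite !inE /= in xS *; exact: SU.
by case.
Qed.


Lemma prod_ind (J : {set I}) D x : \prod_(i in J) ((x \in Mset (g i) D)%:R : R) = (x \in In J D)%:R.
Proof.
case: (pselect (exists i, i \in J /\ ~ Mset (g i) D x)) => [[i0 [i0J ni0]]|h].
  rewrite (bigD1 i0) //= memNset // mul0r.
  by rewrite memNset // => hx; apply: ni0; apply: hx.
rewrite mem_set; last first.
  move=> i iJ; apply: contrapT => hn; apply: h; by exists i.
rewrite big1 // => i iJ; rewrite mem_set //.
by apply: contrapT => hn; apply: h; exists i.
Qed.

Lemma ie_point D x : Un D x ->
  1 = \sum_(J : {set I} | J != finset.set0) (-1) ^+ (#|J|.+1) * ((x \in In J D)%:R : R).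
Proof.
move=> [i0 hi0].
have P0 : \prod_i (- ((x \in Mset (g i) D)%:R : R) + 1) = 0.
  by rewrite (bigD1 i0) //= mem_set // addNr mul0r.
move: P0; rewrite bigA_distr.
under eq_bigr => J _ do rewrite -big_mkcond /= prodrN prod_ind.
rewrite (bigD1 finset.set0) //= cards0 expr0 mul1r.
rewrite mem_set; last by move=> i; rewrite finset.in_set0.
move=> /eqP; rewrite addr_eq0 => /eqP h.
rewrite -[LHS]/(true%:R : R) h -sumrN; apply: eq_bigr => J _.
by rewrite exprS mulN1r mulNr.
Qed.

Lemma incl_excl D : cnt (Un D) =
  \sum_(J : {set I} | J != finset.set0) (-1) ^+ (#|J|.+1) * cnt (In J D).
Proof.
rewrite (@cnt_sum _ (Un D)) //; last exact: Un_fin.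
transitivity (\sum_(x <- fset_set (Un D))
    \sum_(J : {set I} | J != finset.set0) (-1) ^+ (#|J|.+1) * ((x \in In J D)%:R : R)).
  rewrite big_seq [RHS]big_seq; apply: eq_bigr => x.
  rewrite in_fset_set; last exact: Un_fin.
  by rewrite inE => hx; rewrite mem_set //; exact: ie_point.
rewrite exchange_big; apply: eq_bigr => J J0.
rewrite -mulr_sumr (@cnt_sum _ (Un D)) //; [exact: Un_fin|exact: In_sub].
Qed.


Lemma In_desc (J : {set I}) D i0 x : i0 \in J -> 0 <= D ->
  In J D x <-> (x = 0 \/ (common_multiple [seq g i | i in J] x /\ x <= D)).
Proof.
move=> i0J D0; split.
- move=> h; have [n [xn hn]] := h i0 i0J.
  case: (posnP n) => [n0|np]; [left; by rewrite xn n0 mul0r|right].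
  split; last by rewrite xn -ler_pdivlMr.
  split; first by rewrite xn mulr_gt0 // ltr0n.
  move=> y /fintype.imageP[i iJ ->]; have [n' [xn' _]] := h i iJ.
  by exists n'; rewrite xn'.
- case => [-> | [[xp hx] xD]] i iJ.
    by exists 0%N; rewrite mul0r; split => //; rewrite divr_ge0 // ltW.
  have [z hz] := hx _ (fintype.image_f g iJ).
  have zp : (0 < z)%R by rewrite -(ltr0z R) -(pmulr_lgt0 _ (hg i)) -hz.
  have zE : (`|z|%N%:R : R) = z%:~R.
    by rewrite -[_%:R]/((Posz `|z|)%:~R) gez0_abs // ltW.
  exists `|z|%N; rewrite zE -hz; split => //.
  by rewrite ler_pdivlMr // -hz.
Qed.

Lemma cnt_none (J : {set I}) D i0 : i0 \in J -> 0 <= D ->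
  ~ (exists x, common_multiple [seq g i | i in J] x) -> cnt (In J D) = 1.
Proof.
move=> i0J D0 hn.
have -> : In J D = [set 0].
  apply/seteqP; split => x.
    by move/(In_desc x i0J D0) => [//|[hx _]]; exfalso; apply: hn; exists x.
  by move=> /= ->; apply/(In_desc 0 i0J D0); left.
by rewrite /cnt fset_set1 cardfs1.
Qed.

Lemma cnt_L (J : {set I}) D i0 L : i0 \in J -> 0 <= D -> 0 < L ->
  (forall x, common_multiple [seq g i | i in J] x <-> exists n : nat, (0 < n)%N /\ x = n%:R * L) ->
  cnt (In J D) = (Num.trunc (D / L)).+1%:R.
Proof.
move=> i0J D0 L0 hL; set K := Num.trunc (D / L).
have DL0 : 0 <= D / L by rewrite divr_ge0 // ltW.
have -> : In J D = [set` [fset (val i)%:R * L | i in 'I_K.+1]%fset].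
  apply/seteqP; split => x.
    move/(In_desc x i0J D0) => [->|[/hL[n [n0 ->]] hD]] /=.
      by apply/imfsetP; exists ord0 => //=; rewrite mul0r.
    have nK : (n < K.+1)%N by rewrite ltnS /K truncn_ge_nat // ler_pdivlMr.
    by apply/imfsetP; exists (Ordinal nK) => //.
  move=> /= /imfsetP[i _ ->]; apply/(In_desc _ i0J D0).
  case: (posnP i) => [iz|ip]; [left; by rewrite iz mul0r|right].
  split; first by apply/hL; exists i.
  rewrite -ler_pdivlMr //; have := ltn_ord i; rewrite ltnS /K -truncn_ge_nat //.
rewrite /cnt set_fsetK card_imfset ?size_enum_ord //.
move=> i j /= /(mulIf (lt0r_neq0 L0)) /eqP; rewrite eqr_nat => /eqP; exact: val_inj.
Qed.


Lemma term_bound (J : {set I}) D : J != finset.set0 -> 0 < D ->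
  `|cnt (In J D) / D - invLCM [seq g i | i in J]| <= D^-1.
Proof.
case/set0Pn => i0 i0J D0.
have y0N := fintype.image_f g i0J.
case: (pselect (exists x, common_multiple [seq g i | i in J] x)) => hN.
  have [L [L0 hL]] := CM_struct y0N (hg i0) hN.
  rewrite (invLCM_L L0 hL) (cnt_L i0J (ltW D0) L0 hL).
  have /andP[h1 h2] := truncn_itv (divr_ge0 (ltW D0) (ltW L0)).
  move: h1 h2; set K := Num.trunc (D / L) => h1 h2.
  rewrite -natr1 in h2 *.
  have -> : L^-1 = (D / L) / D.
    by field; apply/andP; split; exact: lt0r_neq0.
  rewrite -mulrBl ger0_norm.
    rewrite -[X in _ <= X]mul1r ler_pM2r ?invr_gt0 //; lra.
  apply: mulr_ge0; [lra | by rewrite invr_ge0 ltW].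
rewrite (cnt_none i0J (ltW D0) hN) invLCM_0 // subr0 mul1r ger0_norm //.
by rewrite invr_ge0 ltW.
Qed.

Lemma dens_lim : (fun D => cnt (Un D) / D) @ +oo -->
  \sum_(J : {set I} | J != finset.set0) (-1) ^+ (#|J|.+1) * invLCM [seq g i | i in J].
Proof.
apply: (@lim_bound _ _ _ (\sum_(J : {set I} | J != finset.set0) (1 : R))).
  by apply: sumr_ge0 => J _; exact: ler01.
move=> D D0; rewrite incl_excl mulr_suml -sumrB mulr_suml.
apply: le_trans (ler_norm_sum _ _ _) _; apply: ler_sum => J J0.
rewrite -mulrA -mulrBr normrM normrX normrN1 expr1n mul1r mul1r.
exact: term_bound.
Qed.

End Cnt.

Section G.
Variables (R : realType) (m k : nat) (alpha tau : R).
Hypotheses (hm : (2 <= m)%N) (hk : (1 <= k)%N) (ha1 : 1 < alpha)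
  (ha2 : alpha < m%:R `^ (k%:R^-1)) (htau : 0 < tau).

Let c := ln (m%:R : R) / k%:R.
Let E (x : R) := expR (c * x).
Let a := ln alpha / c.

Lemma m_gt1 : 1 < (m%:R : R). Proof. by rewrite ltr1n. Qed.
Lemma k_gt0 : 0 < (k%:R : R). Proof. by rewrite ltr0n. Qed.
Lemma c_gt0 : 0 < c. Proof. by rewrite /c divr_gt0 ?ln_gt0 ?m_gt1 ?k_gt0. Qed.

Lemma powmE y : (m%:R : R) `^ (y / k%:R) = E y.
Proof.
rewrite /powR ifF; last by apply/negbTE; rewrite gt_eqF // (lt_trans ltr01 m_gt1).
rewrite /E /c; congr expR; have := k_gt0; rewrite lt0r => /andP[k0 _]; by field.
Qed.

Lemma E1E : (m%:R : R) `^ (k%:R^-1) = E 1.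
Proof. by rewrite -powmE div1r. Qed.

Lemma ED x y : E (x + y) = E x * E y.
Proof. by rewrite /E mulrDr expRD. Qed.

Lemma alphaE : alpha = E a.
Proof.
rewrite /E /a mulrC divfK ?lnK //; last by rewrite gt_eqF // c_gt0.
by rewrite posrE (lt_trans ltr01 ha1).
Qed.

Lemma a_gt0 : 0 < a. Proof. by rewrite /a divr_gt0 ?ln_gt0 ?c_gt0. Qed.
Lemma a_lt1 : a < 1.
Proof.
have := ha2; rewrite E1E {1}alphaE /E ltr_expR -subr_gt0 -mulrBr pmulr_rgt0 ?c_gt0 //.
by rewrite subr_gt0.
Qed.

Lemma ltE x y : (tau * E x < tau * E y) = (x < y).
Proof. by rewrite ltr_pM2l // /E ltr_expR ltr_pM2l // c_gt0. Qed.
Lemma leE x y : (tau * E x <= tau * E y) = (x <= y).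
Proof. by rewrite ler_pM2l // /E ler_expR ler_pM2l // c_gt0. Qed.

Lemma HgridE theta g : Hgrid m k alpha tau theta g <->
  exists p : int, g = tau * E (theta + p%:~R) \/ g = tau * E (theta + p%:~R + a).
Proof.
rewrite /Hgrid /=; split => -[p hp]; exists p.
  case: hp => ->; [left|right]; rewrite !powmE ?ED -?alphaE; ring.
case: hp => ->; [left|right]; rewrite !powmE ?ED -?alphaE; ring.
Qed.


Definition sN (t : R) := ln (t / tau) / c.
Lemma EsN t : 0 < t -> tau * E (sN t) = t.
Proof.
move=> t0; rewrite /E /sN (mulrC c) divfK ?lnK; first by field; exact: lt0r_neq0.
  by rewrite posrE divr_gt0.
by rewrite gt_eqF // c_gt0.
Qed.

Definition Xs (p : R) := if p < a then a else 1.

Lemma frE (x : R) : x = (Num.floor x)%:~R + fr x. Proof. by rewrite /fr addrC subrK. Qed.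

Lemma RnextE theta t : 0 < t ->
  Rnext m k alpha tau theta t =
  tau * E (theta + (Num.floor (sN t - theta))%:~R + Xs (fr (sN t - theta))).
Proof.
move=> t0; set s := sN t; set n := Num.floor (s - theta); set ph := fr (s - theta).
have hs : s = theta + n%:~R + ph by have := frE (s - theta); rewrite -/n -/ph => h; lra.
have /andP[ph0 ph1] := fr_itv (s - theta); rewrite -/ph in ph0 ph1.
have a0 := a_gt0; have a1 := a_lt1.
rewrite /Rnext; apply: inf_min.
- split.
    apply/HgridE; rewrite /Xs; case: ifP => _.
      by exists n; right.
    exists (n + 1); left; rewrite intrD intr_one /=; congr (_ * E _); ring.
  rewrite -(EsN t0) -/s ltE hs ltrD2l /Xs; case: ifP => //.
- move=> y [/HgridE[p hp] ty]; move: ty; rewrite -(EsN t0) -/s hs.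
  case: hp => ->; rewrite ltE leE => hlt.
  + have : n%:~R < (p%:~R : R) by lra.
    move/int_lt_succ => h; rewrite /Xs; case: ifP => _; lra.
  + rewrite /Xs; case: ifP => hpa.
      have : n%:~R - 1 < (p%:~R : R) by lra.
      move/int_gt_pred => h; lra.
    have : n%:~R < (p%:~R : R) by move/negbT: hpa; rewrite -leNgt => hpa; lra.
    move/int_lt_succ => h; lra.
Qed.

Lemma RnextG theta t : 0 < t ->
  Rnext m k alpha tau theta t = t * E (Xs (fr (sN t - theta)) - fr (sN t - theta)).
Proof.
move=> t0; rewrite RnextE // -[X in _ = X * _](EsN t0) -mulrA -ED; congr (_ * E _).
have := frE (sN t - theta); lra.
Qed.

Let mu := @lebesgue_measure R.

Lemma cE : k%:R / ln (m%:R : R) = c^-1.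
Proof. by rewrite /c invf_div. Qed.

Lemma EaE : expR (c * a) = alpha. Proof. by rewrite alphaE. Qed.
Lemma E1aE : expR (c * (1 - a)) = m%:R `^ (k%:R^-1) / alpha.
Proof. by rewrite E1E alphaE /E -expRB mulrBr mulr1. Qed.

Lemma part1 : forall t : R, 0 < t ->
     (\int[mu]_(theta in `[0%R, 1%R]%classic)
        (Rnext m k alpha tau theta t)%:E)%E
     = ((k%:R / ln m%:R) * (alpha + m%:R `^ (k%:R^-1) / alpha - 2) * t)%:E.
Proof.
move=> t t0.
transitivity (\int[mu]_(theta in `[0%R, 1%R]%classic) (Gf a c t t (fr (sN t - theta)))%:E)%E.
  apply: eq_integral => theta _; rewrite RnextG // /Gf /Xs /E.
  by case: ifP.
rewrite KL; last by rewrite gt_eqF // c_gt0.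
  rewrite EaE E1aE cE; congr EFin; field; apply/andP; split; [exact: lt0r_neq0 (lt_trans ltr01 ha1)|exact: lt0r_neq0 c_gt0].
by apply/andP; split; [exact: a_gt0|exact: a_lt1].
Qed.

Lemma E1_gt0 : 0 < (m%:R : R) `^ (k%:R^-1). Proof. by rewrite E1E /E expR_gt0. Qed.
Lemma alpha_gt0 : 0 < alpha. Proof. exact: lt_trans ltr01 ha1. Qed.

Lemma EaNE : expR (- c * a) = alpha^-1. Proof. by rewrite mulNr expRN EaE. Qed.
Lemma E1aNE : expR (- c * (1 - a)) = alpha / m%:R `^ (k%:R^-1).
Proof. by rewrite mulNr expRN E1aE invf_div. Qed.

Lemma RnextV theta t : 0 < t ->
  (Rnext m k alpha tau theta t)^-1 = Gf a (- c) t^-1 t^-1 (fr (sN t - theta)).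
Proof.
move=> t0; rewrite RnextG // invfM /E -expRN /Gf /Xs.
by case: ifP => _; rewrite mulNr.
Qed.

Lemma part2 : forall t : R, 0 < t ->
     (\int[mu]_(theta in `[0%R, 1%R]%classic)
        ((Rnext m k alpha tau theta t)^-1)%:E)%E
     = ((k%:R / ln m%:R) * (2 - alpha^-1 - alpha / m%:R `^ (k%:R^-1)) / t)%:E.
Proof.
move=> t t0.
transitivity (\int[mu]_(theta in `[0%R, 1%R]%classic) (Gf a (- c) t^-1 t^-1 (fr (sN t - theta)))%:E)%E.
  by apply: eq_integral => theta _; rewrite RnextV.
rewrite KL; last by rewrite oppr_eq0 gt_eqF // c_gt0.
  rewrite EaNE E1aNE cE; congr EFin; field.
  by rewrite (lt0r_neq0 alpha_gt0) (lt0r_neq0 c_gt0) (lt0r_neq0 t0) (lt0r_neq0 E1_gt0).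
by apply/andP; split; [exact: a_gt0|exact: a_lt1].
Qed.

Lemma intrn (n : nat) : ((n%:Z)%:~R : R) = n%:R. Proof. by []. Qed.

Lemma Em (q : nat) : E (q%:R * k%:R) = (m ^ q)%:R.
Proof.
rewrite /E /c natrX -(lnK (_ : (m%:R : R) \in Num.pos)); last by rewrite posrE (lt_trans ltr01 m_gt1).
rewrite -expRM_natl; congr expR; rewrite lnK ?posrE ?(lt_trans ltr01 m_gt1) //.
by field; exact: lt0r_neq0 k_gt0.
Qed.

Lemma Ed (d : int) : (0 <= d)%R -> exists (q : nat) (j : 'I_k), E d%:~R = (m ^ q)%:R * E j%:R.
Proof.
move=> d0; have kp : (0 < k)%N by [].
exists (`|d| %/ k)%N, (Ordinal (ltn_pmod `|d| kp)) => /=.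
rewrite -Em -ED; congr E.
rewrite -[d%:~R]/(d%:~R) -{1}(gez0_abs d0) intrn {1}(divn_eq `|d| k) natrD natrM; ring.
Qed.

Lemma Sprim_E (j : 'I_k) b : Sprim m k alpha (j, b) = if b then E (j%:R + a) else E j%:R.
Proof. by rewrite /Sprim /= powmE; case: b => //; rewrite ED -alphaE mulrC. Qed.

Lemma Ssec_E (j : 'I_k) b : Ssec m k alpha (j, b) = if b then E (j%:R + 1 - a) else E j%:R.
Proof.
rewrite /Ssec /= !powmE; case: b => //=.
rewrite alphaE /E -expRN -expRD; congr expR; rewrite -natr1; ring.
Qed.

Lemma E_ge1 x : 0 <= x -> 1 <= E x.
Proof. by move=> x0; rewrite /E -expR0 ler_expR mulr_ge0 // ltW // c_gt0. Qed.

Lemma E_split x y (q : nat) (d : int) (j : 'I_k) :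
  E d%:~R = (m ^ q)%:R * E j%:R -> x = y + (d%:~R - j%:R) -> E x = E y * (m ^ q)%:R.
Proof.
move=> h ->; rewrite ED; congr (_ * _).
rewrite /E mulrBr expRB -/(E _) -/(E _) h mulfK //.
by rewrite gt_eqF // expR_gt0.
Qed.

Definition fsel (theta : R) : 'I_k * bool -> R :=
  if fr (sN tau - theta) < a then Ssec m k alpha else Sprim m k alpha.

Lemma grid_gen theta :
  let r := Rnext m k alpha tau theta tau in
  (forall i, Hgrid m k alpha tau theta (r * fsel theta i) /\ r <= r * fsel theta i) /\
  (forall g, Hgrid m k alpha tau theta g -> r <= g ->
     exists (q : nat) i, g = (m ^ q)%:R * (r * fsel theta i)).
Proof.
move=> r; have hr := RnextE theta htau; rewrite -/r in hr.
move: hr; rewrite /fsel /Xs; set n := Num.floor (sN tau - theta).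
have a0 := a_gt0; have a1 := a_lt1.
case: ifP => _ hr.
-
  split.
    move=> [j b]; rewrite Ssec_E hr; case: b.
      split; last by rewrite -mulrA -ED leE; have := ler0n R j; lra.
      apply/HgridE; exists (n + (j%:Z) + 1); left.
      by rewrite -mulrA -ED !intrD intrn; congr (_ * E _); ring.
    split; last by rewrite -mulrA -ED leE; have := ler0n R j; lra.
    apply/HgridE; exists (n + (j%:Z)); right.
    by rewrite -mulrA -ED !intrD intrn; congr (_ * E _); ring.
  move=> g /HgridE[p [->|->]]; rewrite hr leE => hle.
  + have hp : (n + 1 <= p)%R.
      rewrite -(ler_int R) intrD; apply: int_lt_succ; lra.
    have hd : (0 <= p - (n + 1))%R by lia.
    have [q [j hqj]] := Ed hd.
    exists q, (j, true); rewrite Ssec_E /=.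
    have ex : theta + p%:~R = (theta + n%:~R + a + (j%:R + 1 - a)) + ((p - (n + 1))%:~R - j%:R).
      by rewrite intrB intrD intr_one; ring.
    by rewrite (E_split hqj ex) ED; ring.
  + have hp : (n <= p)%R by rewrite -(ler_int R); lra.
    have hd : (0 <= p - n)%R by lia.
    have [q [j hqj]] := Ed hd.
    exists q, (j, false); rewrite Ssec_E /=.
    have ex : theta + p%:~R + a = (theta + n%:~R + a + j%:R) + ((p - n)%:~R - j%:R).
      by rewrite intrB; ring.
    by rewrite (E_split hqj ex) ED; ring.
-
  have hr' : r = tau * E (theta + (n + 1)%:~R) by rewrite hr intrD addrA.
  split.
    move=> [j b]; rewrite Sprim_E hr'; case: b.
      split; last by rewrite -mulrA -ED leE; have := ler0n R j; lra.
      apply/HgridE; exists (n + 1 + (j%:Z)); right.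
      by rewrite -mulrA -ED !intrD intrn; congr (_ * E _); ring.
    split; last by rewrite -mulrA -ED leE; have := ler0n R j; lra.
    apply/HgridE; exists (n + 1 + (j%:Z)); left.
    by rewrite -mulrA -ED !intrD intrn; congr (_ * E _); ring.
  move=> g /HgridE[p [->|->]]; rewrite hr' leE => hle.
  + have hp : (n + 1 <= p)%R by rewrite -(ler_int R); lra.
    have hd : (0 <= p - (n + 1))%R by lia.
    have [q [j hqj]] := Ed hd.
    exists q, (j, false); rewrite Sprim_E /=.
    have ex : theta + p%:~R = (theta + (n + 1)%:~R + j%:R) + ((p - (n + 1))%:~R - j%:R).
      by rewrite intrB; ring.
    by rewrite (E_split hqj ex) ED; ring.
  + have hp : (n + 1 <= p)%R.
      rewrite -(ler_int R) intrD; apply: int_lt_succ; rewrite intrD intr_one /= in hle; lra.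
    have hd : (0 <= p - (n + 1))%R by lia.
    have [q [j hqj]] := Ed hd.
    exists q, (j, true); rewrite Sprim_E /=.
    have ex : theta + p%:~R + a = (theta + (n + 1)%:~R + (j%:R + a)) + ((p - (n + 1))%:~R - j%:R).
      by rewrite intrB; ring.
    by rewrite (E_split hqj ex) ED; ring.
Qed.

Lemma Rnext_gt0 theta t : 0 < t -> 0 < Rnext m k alpha tau theta t.
Proof. by move=> t0; rewrite RnextE // mulr_gt0 // /E expR_gt0. Qed.

Lemma fsel_gt0 theta i : 0 < fsel theta i.
Proof.
case: i => j b; rewrite /fsel; case: ifP => _; [rewrite Ssec_E|rewrite Sprim_E];
  by case: b; rewrite /E expR_gt0.
Qed.

Lemma Mset_mul (M : nat) (h D x : R) : (0 < M)%N -> 0 < h -> Mset (M%:R * h) D x -> Mset h D x.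
Proof.
move=> M0 h0 [n [-> hn]]; exists (n * M)%N; split; first by rewrite natrM mulrA.
rewrite natrM -ler_pdivlMr ?ltr0n //; apply: le_trans hn _.
rewrite (_ : D / (M%:R * h) = D / h / M%:R) //; field.
by rewrite pnatr_eq0 -lt0n M0 (lt0r_neq0 h0).
Qed.

Lemma Dunion_Un theta D :
  Dunion m k alpha tau theta D =
  Un (fun i => Rnext m k alpha tau theta tau * fsel theta i) D.
Proof.
have [h1 h2] := grid_gen theta.
apply/seteqP; split => x.
- move=> [g [Hg rg] hx]; have [q [i gE]] := h2 g Hg rg; rewrite gE in hx.
  exists i; apply: Mset_mul hx; first by rewrite expn_gt0 (leq_trans _ hm).
  by rewrite mulr_gt0 // ?Rnext_gt0 // fsel_gt0.
- move=> [i hx]; have [Hg rg] := h1 i; by exists (Rnext m k alpha tau theta tau * fsel theta i).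
Qed.

Lemma Dens_eq theta : Dens m k alpha tau theta =
  (Rnext m k alpha tau theta tau)^-1 * SigmaLCM (fsel theta).
Proof.
set r := Rnext m k alpha tau theta tau.
have r0 : 0 < r by exact: Rnext_gt0.
have hg : forall i, 0 < r * fsel theta i by move=> i; rewrite mulr_gt0 // fsel_gt0.
rewrite /Dens.
have -> : (fun Delta : R => (#|` fset_set (Dunion m k alpha tau theta Delta)|)%:R / Delta) =
          (fun D => cnt (Un (fun i => r * fsel theta i) D) / D).
  by apply: funext => D; rewrite Dunion_Un.
rewrite (cvg_lim (@Rhausdorff R) (dens_lim hg)) /SigmaLCM mulr_sumr.
apply: eq_bigr => J /set0Pn[i0 i0J].
rewrite mulrCA; congr (_ * _).
rewrite (_ : [seq r * fsel theta i | i in J] = map ( *%R r) [seq fsel theta i | i in J]);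
  last by rewrite -map_comp.
exact: (invLCM_scale r0 (fintype.image_f (fsel theta) i0J) (fsel_gt0 _ _)).
Qed.

Lemma part3 :
  (\int[mu]_(theta in `[0%R, 1%R]%classic)
      (Dens m k alpha tau theta)%:E)%E
  = ((k%:R / ln m%:R) *
       ((1 - alpha / m%:R `^ (k%:R^-1)) * SigmaLCM (Sprim m k alpha)
        + (1 - alpha^-1) * SigmaLCM (Ssec m k alpha)) / tau)%:E.
Proof.
transitivity (\int[mu]_(theta in `[0%R, 1%R]%classic)
   (Gf a (- c) (SigmaLCM (Ssec m k alpha) / tau) (SigmaLCM (Sprim m k alpha) / tau)
      (fr (sN tau - theta)))%:E)%E.
  apply: eq_integral => theta _; rewrite Dens_eq RnextV // /fsel /Gf.
  by case: ifP => _; congr EFin; ring.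
rewrite KL; last by rewrite oppr_eq0 gt_eqF // c_gt0.
  rewrite EaNE E1aNE cE; congr EFin; field.
  by rewrite (lt0r_neq0 alpha_gt0) (lt0r_neq0 c_gt0) (lt0r_neq0 htau) (lt0r_neq0 E1_gt0).
by apply/andP; split; [exact: a_gt0|exact: a_lt1].
Qed.

End G.

Theorem claim4p1 (R : realType) (m k : nat) (alpha tau : R) :
  (2 <= m)%N -> (1 <= k)%N ->
  1 < alpha -> alpha < m%:R `^ (k%:R^-1) -> 0 < tau ->
  (forall t : R, 0 < t ->
     (\int[@lebesgue_measure R]_(theta in `[0%R, 1%R]%classic)
        (Rnext m k alpha tau theta t)%:E)%E
     = ((k%:R / ln m%:R) * (alpha + m%:R `^ (k%:R^-1) / alpha - 2) * t)%:E)
  /\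
  (forall t : R, 0 < t ->
     (\int[@lebesgue_measure R]_(theta in `[0%R, 1%R]%classic)
        ((Rnext m k alpha tau theta t)^-1)%:E)%E
     = ((k%:R / ln m%:R) * (2 - alpha^-1 - alpha / m%:R `^ (k%:R^-1)) / t)%:E)
  /\
  (\int[@lebesgue_measure R]_(theta in `[0%R, 1%R]%classic)
      (Dens m k alpha tau theta)%:E)%E
  = ((k%:R / ln m%:R) *
       ((1 - alpha / m%:R `^ (k%:R^-1)) * SigmaLCM (Sprim m k alpha)
        + (1 - alpha^-1) * SigmaLCM (Ssec m k alpha)) / tau)%:E.
Proof.
move=> hm hk ha1 ha2 htau; split; [|split].
- exact: part1.
- exact: part2.
- exact: part3.
Qed.
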